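(* For every abstract transducer $T_\epsilon=(Q,D_I,D_O,\iota_0,F,\delta)$ (possibly having $\epsilon$-moves) there exists an input-$\epsilon$-free abstract transducer $T$ with the same abstract input domain and abstract output domain such that $T_\epsilon\equiv T$, i.e. $\mathrm{Tr}(T_\epsilon)=\mathrm{Tr}(T)$ and $\mathrm{Tr}_{acc}(T_\epsilon)=\mathrm{Tr}_{acc}(T)$.
   Context: Abstract word domain over an alphabet $A$: a set $W$ of abstract words forming a complete lattice $(W,\sqsubseteq,\sqcap,\sqcup,\top,\bot)$, a denotation $[\![\cdot]\!]:W\to 2^{A^\infty}$ with $A^\infty=A^*\cup A^\omega$, and an abstraction $\alpha:2^{A^\infty}\to W$ with $[\![\alpha(S)]\!]=S$. It contains an abstract epsilon word $w_\epsilon$ with $[\![w_\epsilon]\!]=\{\epsilon\}$, and $[\![\bot]\!]=\emptyset$. Operations: concatenation $[\![u\cdot v]\!]=\{x\cdot y\mid x\in[\![u]\!],y\in[\![v]\!]\}$ (an infinite word $x$ concatenated with anything is $x$); left quotient $u^{v}=\alpha(\{s\mid p\cdot s\in[\![u]\!],\,p\in[\![v]\!]\})$; $\mathrm{head}(u)=\alpha(\{h\mid |h|=1,\ h\cdot x\in[\![u]\!]\})$; $\mathrm{tail}(u)=\alpha(\{x\mid h\cdot x\in[\![u]\!],\ |h|=1\})$. An abstract transducer is $T=(Q,D_I,D_O,\iota_0,F,\delta)$ where: $Q$ is a finite set of control states, implicitly containing a trap state $q_{trap}$ with transition $(q_{trap},\top,q_{trap},w_\epsilon)$ and a bottom state $q_\bot\notin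 F$ with no leaving transitions; $D_I$ is an abstract word domain (abstract words $W_I$) over a concrete input alphabet $\Sigma$ with denotations in $2^{\Sigma^*}$ and whose lattice is distributive and complemented; $D_O$ is an abstract word domain (abstract words $W_O$) over an output alphabet $\Theta$; $\iota_0$ is a non-empty finite partial map $Q\to W_O$ (the initial transducer state); $F\subseteq Q$ are accepting states; $\delta\subseteq Q\times W_I\times Q\times W_O$ is the transition relation, where no transition has input word $\bot$. A transducer state is a finite partial map $Q\to W_O$ (a set of pairs with distinct first components). For a set $M\subseteq Q\times W_O$ its image join is $\bigsqcup_\to M=\{(q,\bigsqcup\{\theta\mid(q,\theta)\in M\})\mid (q,\cdot)\in M\}$. An $\epsilon$-move is a transition whose input word $w$ has $[\![w]\!]=\{\epsilon\}$; $T$ is input-$\epsilon$-free if it has no $\epsilon$-move. The $\epsilon$-closure $E(q)$ is the set of states reachable from $q$ (including $q$) using only $\epsilon$-moves, plus $q_\bot$ if $E(q)$ contains an $\epsilon$-loop from which no state without leaving $\epsilon$-moves is reachable. Closure termination states: $CT(q)=\{q'\in E(q)\mid$ no $\epsilon$-move leaves $q'\}\cup(E(q)\cap F)$. Concrete language on termination $\Lambda(q,q_t)$: for $q_t\neq q_\bot$ the union, over all finite paths of $\epsilon$-moves from $q$ to $q_t$, of the concatenation of the denotations of the output words along the path ($\{\epsilon\}$ for the empty path); for $q_t=q_\bot$ the union over all infinite $\epsilon$-move paths from $q$ of the concatenations of their output denotations. Output closure (lossless): $\mathrm{Cl}(q,\theta_0)=\{(q_t,\alpha([\![\theta_0]\!]\cdot\Lambda(q,q_t)))\mid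 q_t\in CT(q)\}$. Run: $\mathrm{run}(q,\theta,w,w_\ell)=\{(q,\theta)\}$ if $w=w_\epsilon$, and otherwise $\bigsqcup_\to\bigcup\{\mathrm{run}(q'',\theta\cdot\theta'',\mathrm{tail}(w),w_\ell)\mid (q,w_\tau,q',\theta')\in\delta,\ (q'',\theta'')\in\mathrm{Cl}(q',\theta'),\ (w\cdot w_\ell)^{w_\tau}\neq\bot,\ \mathrm{head}(w)^{\mathrm{head}(w_\tau)}\neq\bot\}$. For a transducer state $\iota$, $\widehat{\mathrm{run}}(\iota,w,w_\ell)=\bigsqcup_\to\bigcup_{(q,\theta)\in\iota}\mathrm{run}(q,\theta,w,w_\ell)$, and for $\bar\sigma\in\Sigma^*$, $\hat\sigma\subseteq\Sigma^*$: $\widehat{\mathrm{run}}_T(\bar\sigma,\hat\sigma)=\widehat{\mathrm{run}}(\iota_0,\alpha_I(\{\bar\sigma\}),\alpha_I(\hat\sigma))$. Intermediate input language $L_{in}(T)$: pairs $(\bar\sigma,\hat\sigma)$ such that $\widehat{\mathrm{run}}_T(\bar\sigma,\hat\sigma)$ contains a pair $(q,\theta)$ with $[\![\theta]\!]\neq\emptyset$. Transductions $\mathrm{Tr}(T)=\{(\bar\sigma,\hat\sigma,[\![\theta]\!])\mid(\bar\sigma,\hat\sigma)\in L_{in}(T),\ (q,\theta)\in\widehat{\mathrm{run}}_T(\bar\sigma,\hat\sigma)\}$; accepting transductions $\mathrm{Tr}_{acc}(T)$: same with additionally $q\in F$. Two transducers are equivalent ($T_1\equiv T_2$) iff $\mathrm{Tr}(T_1)=\mathrm{Tr}(T_2)$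 and $\mathrm{Tr}_{acc}(T_1)=\mathrm{Tr}_{acc}(T_2)$. *)

(* Defs.v *)
From Stdlib Require Import List.
Import ListNotations.
Set Implicit Arguments.

Inductive iword (A : Type) : Type :=
| Fin : list A -> iword A
| Inf : (nat -> A) -> iword A.
Arguments Fin {A} _.
Arguments Inf {A} _.

Definition icat {A : Type} (x y : iword A) : iword A :=
  match x, y with
  | Fin l, Fin m => Fin (l ++ m)
  | Fin l, Inf f =>
      Inf (fun n => if Nat.ltb n (length l) then nth n l (f 0) else f (n - length l))
  | Inf f, _ => Inf f
  end.

Definition ising {A : Type} (a : A) : iword A := Fin [a].

Fixpoint icatn {A : Type} (xs : nat -> iword A) (n : nat) : iword A :=
  match n with
  | 0 => Fin []
  | S k => icat (icatn xs k) (xs k)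
  end.

Definition shorter {A : Type} (w : iword A) (k : nat) : Prop :=
  exists l, w = Fin l /\ length l < k.

(* z is the (infinite) concatenation x_0 x_1 x_2 ... :
   every finite partial concatenation is a prefix of z, and z is either
   equal to some partial concatenation or the partial concatenations are
   unboundedly long (so z is the infinite limit). *)
Definition iconcat_inf {A : Type} (xs : nat -> iword A) (z : iword A) : Prop :=
  (forall n, exists r, z = icat (icatn xs n) r) /\
  ((exists n, z = icatn xs n) \/ (forall k, exists n, ~ shorter (icatn xs n) k)).

(* X = type of concrete words, xeps = the empty word.
   The lattice is complete: sup gives the join of an arbitrary set. *)
Record AWD (X : Type) (xeps : X) := {
  W : Type;
  le : W -> W -> Prop;
  sup : (W -> Prop) -> W;
  le_refl : forall u, le u u;
  le_trans : forall u v w, le u v -> le v w -> le u w;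
  le_antisym : forall u v, le u v -> le v u -> u = v;
  sup_ub : forall (S : W -> Prop) u, S u -> le u (sup S);
  sup_least : forall (S : W -> Prop) v, (forall u, S u -> le u v) -> le (sup S) v;
  den : W -> X -> Prop;
  alpha : (X -> Prop) -> W;
  den_alpha : forall (S : X -> Prop) x, den (alpha S) x <-> S x;
  weps : W;
  den_weps : forall x, den weps x <-> x = xeps;
  den_bot : forall x, ~ den (sup (fun _ => False)) x
}.
Arguments AWD : clear implicits.
Arguments W {X xeps} _.
Arguments le {X xeps} _ _ _.
Arguments sup {X xeps} _ _.
Arguments den {X xeps} _ _ _.
Arguments alpha {X xeps} _ _.
Arguments weps {X xeps} _.

Section LatticeOps.
Context {X : Type} {xeps : X} (D : AWD X xeps).
Definition wtop : W D := sup D (fun _ => True).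
Definition wbot : W D := sup D (fun _ => False).
Definition wjoin (u v : W D) : W D := sup D (fun x => x = u \/ x = v).
Definition wmeet (u v : W D) : W D := sup D (fun x => le D x u /\ le D x v).
End LatticeOps.

Section WordOps.
Context {A X : Type} {xeps : X} (cat : X -> X -> X) (sing : A -> X)
        (D : AWD X xeps).
Definition wconcat (u v : W D) : W D :=
  alpha D (fun z => exists x y, den D u x /\ den D v y /\ z = cat x y).
Definition wlquot (u v : W D) : W D :=
  alpha D (fun s => exists p, den D v p /\ den D u (cat p s)).
Definition whead (u : W D) : W D :=
  alpha D (fun h => exists a x, h = sing a /\ den D u (cat h x)).
Definition wtail (u : W D) : W D :=
  alpha D (fun x => exists a, den D u (cat (sing a) x)).
End WordOps.

Record InDomain (Sig : Type) := {
  aw : AWD (list Sig) [];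
  in_distr : forall u v w : W aw,
      wmeet aw u (wjoin aw v w) = wjoin aw (wmeet aw u v) (wmeet aw u w);
  in_compl : forall u : W aw, exists v,
      wmeet aw u v = wbot aw /\ wjoin aw u v = wtop aw
}.
Arguments InDomain : clear implicits.
Arguments aw {Sig} _.

Definition OutDomain (The : Type) := AWD (iword The) (Fin []).

Section Transducers.
Context {Sig The : Type} (DI : InDomain Sig) (DO : OutDomain The).

Notation IW := (W (aw DI)).
Notation OW := (W DO).

(* Q is finite and implicitly contains q_trap and q_bot.  The trap
   transition (q_trap, top, q_trap, w_eps) is implicit (see [trans]);
   delta lists the explicit transitions. *)
Record transducer := {
  Q : Type;
  Q_fin : exists l : list Q, forall q, In q l;
  qtrap : Q;
  qbot : Q;
  qtrap_qbot : qtrap <> qbot;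
  iota0 : Q -> OW -> Prop;
  iota0_fun : forall q t1 t2, iota0 q t1 -> iota0 q t2 -> t1 = t2;
  iota0_ne : exists q t, iota0 q t;
  Facc : Q -> Prop;
  qbot_notF : ~ Facc qbot;
  delta : Q -> IW -> Q -> OW -> Prop;
  delta_notbot : forall q w q' t, delta q w q' t -> w <> wbot (aw DI);
  delta_qbot : forall w q' t, ~ delta qbot w q' t;
  delta_qtrap : forall w q' t, ~ delta qtrap w q' t
}.
Arguments Q : clear implicits.

Definition trans (T : transducer) (q : Q T) (w : IW) (q' : Q T) (t : OW) : Prop :=
  delta T q w q' t \/
  (q = qtrap T /\ w = wtop (aw DI) /\ q' = qtrap T /\ t = weps DO).

Definition eps_word (w : IW) : Prop := forall s, den (aw DI) w s <-> s = [].

Definition eps_move (T : transducer) q w q' t : Prop :=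
  trans T q w q' t /\ eps_word w.

Definition eps_free (T : transducer) : Prop :=
  forall q w q' t, delta T q w q' t -> ~ eps_word w.

Definition eps_step (T : transducer) (q q' : Q T) : Prop :=
  exists w t, eps_move T q w q' t.

Inductive ereach (T : transducer) (q : Q T) : Q T -> Prop :=
| er_refl : ereach T q q
| er_step : forall q1 q2, ereach T q q1 -> eps_step T q1 q2 -> ereach T q q2.

Definition has_eps_out (T : transducer) (q : Q T) : Prop :=
  exists q', eps_step T q q'.

Definition in_E (T : transducer) (q q' : Q T) : Prop :=
  ereach T q q' \/
  (q' = qbot T /\
   exists q1, ereach T q q1 /\
     (exists q2, eps_step T q1 q2 /\ ereach T q2 q1) /\
     (forall q3, ereach T q1 q3 -> has_eps_out T q3)).

Definition CT (T : transducer) (q q' : Q T) : Prop :=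
  in_E T q q' /\ (~ has_eps_out T q' \/ Facc T q').

Inductive epath (T : transducer) : Q T -> Q T -> iword The -> Prop :=
| ep_nil : forall q, epath T q q (Fin [])
| ep_cons : forall q w q1 t q2 x y,
    eps_move T q w q1 t -> den DO t x -> epath T q1 q2 y ->
    epath T q q2 (icat x y).

Definition inf_epath (T : transducer) (q : Q T) (z : iword The) : Prop :=
  exists (qs : nat -> Q T) (ws : nat -> IW) (ts : nat -> OW) (xs : nat -> iword The),
    qs 0 = q /\
    (forall i, eps_move T (qs i) (ws i) (qs (S i)) (ts i) /\ den DO (ts i) (xs i)) /\
    iconcat_inf xs z.

Definition Lambda (T : transducer) (q qt : Q T) (z : iword The) : Prop :=
  (qt <> qbot T /\ epath T q qt z) \/ (qt = qbot T /\ inf_epath T q z).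

Definition Cl (T : transducer) (q : Q T) (t0 : OW) : Q T -> OW -> Prop :=
  fun qt t => CT T q qt /\
    t = alpha DO (fun z => exists x y, den DO t0 x /\ Lambda T q qt y /\ z = icat x y).

Definition ijoin {Qt : Type} (M : Qt -> OW -> Prop) : Qt -> OW -> Prop :=
  fun q t => (exists t', M q t') /\ t = sup DO (M q).

Definition iconc (u v : IW) : IW := wconcat (@app Sig) (aw DI) u v.
Definition iquot (u v : IW) : IW := wlquot (@app Sig) (aw DI) u v.
Definition ihead (u : IW) : IW := whead (@app Sig) (fun a : Sig => [a]) (aw DI) u.
Definition itail (u : IW) : IW := wtail (@app Sig) (fun a : Sig => [a]) (aw DI) u.
Definition oconc (u v : OW) : OW := wconcat (@icat The) DO u v.

Definition adm (T : transducer) (q : Q T) (w wl wt : IW) (q' : Q T) (t' : OW)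
    (q'' : Q T) (t'' : OW) : Prop :=
  trans T q wt q' t' /\ Cl T q' t' q'' t'' /\
  iquot (iconc w wl) wt <> wbot (aw DI) /\
  iquot (ihead w) (ihead wt) <> wbot (aw DI).

(* RunR T q t w wl M  <->  run(q, t, w, wl) = M  (least solution of the
   recursive definition) *)
Inductive RunR (T : transducer) : Q T -> OW -> IW -> IW -> (Q T -> OW -> Prop) -> Prop :=
| run_base : forall q t w wl, w = weps (aw DI) ->
    RunR T q t w wl (fun q' t' => q' = q /\ t' = t)
| run_step : forall q t w wl
    (f : IW -> Q T -> OW -> Q T -> OW -> (Q T -> OW -> Prop)),
    w <> weps (aw DI) ->
    (forall wt q' t' q'' t'', adm T q w wl wt q' t' q'' t'' ->
        RunR T q'' (oconc t t'') (itail w) wl (f wt q' t' q'' t'')) ->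
    RunR T q t w wl
      (ijoin (fun q0 t0 => exists wt q' t' q'' t'',
                 adm T q w wl wt q' t' q'' t'' /\ f wt q' t' q'' t'' q0 t0)).

Definition RunHat (T : transducer) (iota : Q T -> OW -> Prop) (w wl : IW)
    (M : Q T -> OW -> Prop) : Prop :=
  exists g : Q T -> OW -> (Q T -> OW -> Prop),
    (forall q t, iota q t -> RunR T q t w wl (g q t)) /\
    M = ijoin (fun q0 t0 => exists q t, iota q t /\ g q t q0 t0).

Definition runT (T : transducer) (sb : list Sig) (sh : list Sig -> Prop)
    (M : Q T -> OW -> Prop) : Prop :=
  RunHat T (iota0 T) (alpha (aw DI) (fun s => s = sb)) (alpha (aw DI) sh) M.

Definition Lin (T : transducer) (sb : list Sig) (sh : list Sig -> Prop) : Prop :=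
  exists M, runT T sb sh M /\ exists q t, M q t /\ exists x, den DO t x.

Definition Tr (T : transducer) (sb : list Sig) (sh : list Sig -> Prop)
    (L : iword The -> Prop) : Prop :=
  Lin T sb sh /\
  exists M q t, runT T sb sh M /\ M q t /\ (forall x, L x <-> den DO t x).

Definition Tr_acc (T : transducer) (sb : list Sig) (sh : list Sig -> Prop)
    (L : iword The -> Prop) : Prop :=
  Lin T sb sh /\
  exists M q t, runT T sb sh M /\ M q t /\ Facc T q /\ (forall x, L x <-> den DO t x).

Definition tequiv (T1 T2 : transducer) : Prop :=
  (forall sb sh L, Tr T1 sb sh L <-> Tr T2 sb sh L) /\
  (forall sb sh L, Tr_acc T1 sb sh L <-> Tr_acc T2 sb sh L).

End Transducers.

(* Main.v *)
Require Import Defs.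
From Stdlib Require Import List Classical FunctionalExtensionality PropExtensionality.
Import ListNotations.
Set Implicit Arguments.

Lemma pext2 : forall A B (P R : A -> B -> Prop), (forall a b, P a b <-> R a b) -> P = R.
Proof.
  intros. apply functional_extensionality; intro a. apply functional_extensionality; intro b.
  apply propositional_extensionality. auto.
Qed.
Lemma pext1 : forall A (P R : A -> Prop), (forall a, P a <-> R a) -> P = R.
Proof.
  intros. apply functional_extensionality; intro a. apply propositional_extensionality. auto.
Qed.

Lemma run_fun : forall Sig The (DI : InDomain Sig) (DO : OutDomain The) (T : transducer DI DO)
  q t w wl M1, RunR T q t w wl M1 -> forall M2, RunR T q t w wl M2 -> M1 = M2.
Proof.
  intros Sig The DI DO T q t w wl M1 H. induction H; intros M2 H2.
  - inversion H2; subst; [reflexivity| congruence].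
  - inversion H2; subst; [congruence|].
    match goal with Hr : forall (wt : W (aw DI)) q1 t1 q2 t2, adm _ _ _ _ _ _ _ _ _ -> RunR _ _ _ _ _ (f0 _ _ _ _ _) |- _ => rename Hr into H8 end.
    f_equal. apply pext2. intros q0 t0. split.
    + intros [wt [q' [t' [q'' [t'' [Ha Hf]]]]]]. exists wt, q', t', q'', t''. split; auto.
      rewrite <- (H1 _ _ _ _ _ Ha _ (H8 _ _ _ _ _ Ha)). auto.
    + intros [wt [q' [t' [q'' [t'' [Ha Hf]]]]]]. exists wt, q', t', q'', t''. split; auto.
      rewrite (H1 _ _ _ _ _ Ha _ (H8 _ _ _ _ _ Ha)). auto.
Qed.

Section Constr.
Variables (Sig The : Type) (DI : InDomain Sig) (DO : OutDomain The) (Te : transducer DI DO).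

Notation IW := (W (aw DI)).
Notation OW := (W DO).

Definition QT : Type := option (option (Q Te)).
Definition ee (q : Q Te) : QT := Some (Some q).
Definition C1 : Prop := alpha (aw DI) (fun _ => False) = wbot (aw DI).
Definition goodlab (wt wtT : IW) : Prop :=
  (C1 /\ wtT = wt /\ ~ eps_word DI wt /\ wt <> wbot (aw DI)) \/
  (~ C1 /\ wtT = alpha (aw DI) (fun _ => False)).
Definition dT (qT : QT) (wtT : IW) (q'T : QT) (tT : OW) : Prop :=
  exists q wt q' t' q'', qT = ee q /\ q'T = ee q'' /\ trans Te q wt q' t' /\
    Cl Te q' t' q'' tT /\ goodlab wt wtT.
Definition i0T (qT : QT) (t : OW) : Prop := exists q, qT = ee q /\ iota0 Te q t.
Definition FT (qT : QT) : Prop := exists q, qT = ee q /\ Facc Te q.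

Lemma QT_fin : exists l : list QT, forall q, In q l.
Proof.
  destruct (Q_fin Te) as [l Hl].
  exists (None :: Some None :: map ee l).
  intros [[q|]|]; [right; right; change (In (ee q) (map ee l)); apply in_map, Hl|simpl;auto|simpl;auto].
Qed.

Lemma i0T_fun : forall q t1 t2, i0T q t1 -> i0T q t2 -> t1 = t2.
Proof.
  intros q t1 t2 [q1 [-> H1]] [q2 [E H2]]. injection E as <-. eapply iota0_fun; eauto.
Qed.

Lemma i0T_ne : exists q t, i0T q t.
Proof. destruct (iota0_ne Te) as [q [t H]]. exists (ee q), t, q. auto. Qed.

Lemma FT_bot : ~ FT (Some None).
Proof. intros [q [E _]]. discriminate. Qed.

Lemma den_alpha0 : forall x, ~ den (aw DI) (alpha (aw DI) (fun _ => False)) x.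
Proof. intros x H. apply den_alpha in H. exact H. Qed.

Lemma dT_noteps : forall q w q' t, dT q w q' t -> ~ eps_word DI w.
Proof.
  intros q w q' t [q0 [wt [q1 [t1 [q2 [_ [_ [_ [_ [[_ [-> [H _]]]|[_ ->]]]]]]]]]]]; auto.
  intros He. apply (@den_alpha0 []). apply He. reflexivity.
Qed.

Lemma dT_notbot : forall q w q' t, dT q w q' t -> w <> wbot (aw DI).
Proof.
  intros q w q' t [q0 [wt [q1 [t1 [q2 [_ [_ [_ [_ [[_ [-> [_ H]]]|[H ->]]]]]]]]]]]; auto.
Qed.

Lemma dT_bot : forall w q' t, ~ dT (Some None) w q' t.
Proof. intros w q' t [q0 [_ [_ [_ [_ [E _]]]]]]. discriminate. Qed.
Lemma dT_trap : forall w q' t, ~ dT None w q' t.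
Proof. intros w q' t [q0 [_ [_ [_ [_ [E _]]]]]]. discriminate. Qed.

Definition TT : transducer DI DO := {|
  Q := QT; Q_fin := QT_fin; qtrap := None; qbot := Some None;
  qtrap_qbot := ltac:(discriminate);
  iota0 := i0T; iota0_fun := i0T_fun; iota0_ne := i0T_ne;
  Facc := FT; qbot_notF := FT_bot;
  delta := dT; delta_notbot := dT_notbot; delta_qbot := dT_bot; delta_qtrap := dT_trap |}.


Lemma alpha_bot : forall S, alpha (aw DI) S = wbot (aw DI) -> C1 /\ forall x, ~ S x.
Proof.
  intros S E.
  assert (HS : forall x, ~ S x).
  { intros x Hx. pose proof (proj2 (den_alpha (aw DI) S x) Hx) as H. rewrite E in H.
    exact (den_bot _ _ H). }
  split; auto. unfold C1. rewrite <- E. f_equal. apply pext1. intro a. split; intuition. apply (HS a); auto.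
Qed.

Lemma C1_alpha : forall S, C1 -> (forall x, ~ S x) -> alpha (aw DI) S = wbot (aw DI).
Proof.
  intros S H HS. unfold C1 in H. rewrite <- H. f_equal. apply pext1. intro a. split; intuition. apply (HS a); auto.
Qed.

Lemma iquot_nb : forall u v, iquot DI u v <> wbot (aw DI) ->
  ~ C1 \/ exists s p, den (aw DI) v p /\ den (aw DI) u (p ++ s).
Proof.
  intros u v H. destruct (classic C1) as [HC|HC]; auto. right.
  apply NNPP. intro Hn. apply H. unfold iquot, wlquot. apply C1_alpha; auto.
  intros s [p Hp]. apply Hn. eauto.
Qed.

Lemma iquot_nb2 : forall u v, ~ C1 -> iquot DI u v <> wbot (aw DI).
Proof. intros u v HC E. apply alpha_bot in E. tauto. Qed.

Lemma eps_never : forall w wt, C1 -> eps_word DI wt -> iquot DI (ihead DI w) (ihead DI wt) = wbot (aw DI).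
Proof.
  intros w wt HC He. unfold iquot, wlquot. apply C1_alpha; auto.
  intros s [p [Hp _]]. unfold ihead, whead in Hp. apply den_alpha in Hp.
  destruct Hp as [a [x [Ep Hx]]]. subst p. apply He in Hx. discriminate.
Qed.

Lemma bot_never : forall u, C1 -> iquot DI u (wbot (aw DI)) = wbot (aw DI).
Proof.
  intros u HC. unfold iquot, wlquot. apply C1_alpha; auto.
  intros s [p [Hp _]]. exact (den_bot _ _ Hp).
Qed.

Lemma icat_nil : forall (x : iword The), icat x (Fin []) = x.
Proof. intros [l|f]; simpl; auto. rewrite app_nil_r. auto. Qed.

Lemma alpha_den : forall S, alpha DO (fun z => den DO (alpha DO S) z) = alpha DO S.
Proof. intros S. f_equal. apply pext1. intro a. apply den_alpha. Qed.

Lemma eps_step_TT : forall qT q', eps_step (TT) qT q' -> qT = None.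
Proof.
  intros qT q' [w [t [Htr He]]]. destruct Htr as [Hd|[E _]].
  - exfalso. exact (dT_noteps Hd He).
  - exact E.
Qed.

Lemma ereach_TT : forall q x, ereach (TT) (ee q) x -> x = ee q.
Proof.
  intros q x H. induction H; auto. subst. apply eps_step_TT in H0. discriminate.
Qed.

Lemma Cl_TT_inv : forall q t q2 t2, Cl (TT) (ee q) t q2 t2 ->
  q2 = ee q /\ t2 = alpha DO (fun z => den DO t z).
Proof.
  intros q t q2 t2 [[HE _] Ht].
  assert (q2 = ee q).
  { destruct HE as [HE|[_ [q1 [Hr [[q3 [Hs _]] _]]]]]. apply ereach_TT; auto.
    apply ereach_TT in Hr. subst. apply eps_step_TT in Hs. discriminate. }
  subst. split; auto. f_equal. apply pext1. intro z. split.
  - intros [x [y [Hx [HL ->]]]]. destruct HL as [[_ HP]|[E _]]; [|discriminate].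
    inversion HP; subst.
    + rewrite icat_nil. auto.
    + match goal with Hm : eps_move _ _ _ _ _ |- _ => destruct Hm as [Htr He] end.
      assert (Hn : ee q = None) by (eapply eps_step_TT; exists w, t0; split; eauto). discriminate.
  - intros Hz. exists z, (Fin []). split; auto. split; [|rewrite icat_nil; auto].
    left. split; [discriminate|]. constructor.
Qed.

Lemma Cl_TT_id : forall t q' t' q'', Cl Te q' t' q'' t -> Cl (TT) (ee q'') t (ee q'') t.
Proof.
  intros t q' t' q'' HC.
  assert (Ht : t = alpha DO (fun z => den DO t z)).
  { destruct HC as [_ ->]. symmetry. apply alpha_den. }
  split.
  - split. left. constructor. left. intros [q3 Hs]. apply eps_step_TT in Hs. discriminate.
  - rewrite Ht at 1. f_equal. apply pext1. intro z. split.
    + intros Hz. exists z, (Fin []). split; auto. split; [|rewrite icat_nil; auto].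
      left. split; [discriminate|]. constructor.
    + intros [x [y [Hx [HL ->]]]]. destruct HL as [[_ HP]|[E _]]; [|discriminate].
      inversion HP; subst.
      * rewrite icat_nil. auto.
      * match goal with Hm : eps_move _ _ _ _ _ |- _ => destruct Hm as [Htr He] end.
        assert (Hn : ee q'' = None) by (eapply eps_step_TT; exists w, t0; split; eauto). discriminate.
Qed.

Lemma adm_fwd : forall q w wl wt q' t' q'' t'', adm Te q w wl wt q' t' q'' t'' ->
  exists wtT, adm (TT) (ee q) w wl wtT (ee q'') t'' (ee q'') t''.
Proof.
  intros q w wl wt q' t' q'' t'' [Htr [HCl [HA HB]]].
  destruct (classic C1) as [HC|HC].
  - assert (He : ~ eps_word DI wt) by (intro He; apply HB; apply eps_never; auto).
    assert (Hb : wt <> wbot (aw DI)) by (intro E; subst; apply HA; apply bot_never; auto).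
    exists wt. split; [|split; [|split]]; auto.
    + left. exists q, wt, q', t', q''. do 4 (split; [solve [auto]|]). left. auto.
    + eapply Cl_TT_id; eauto.
  - exists (alpha (aw DI) (fun _ => False)). split; [|split; [|split]]; auto using iquot_nb2.
    + left. exists q, wt, q', t', q''. do 4 (split; [solve [auto]|]). right. auto.
    + eapply Cl_TT_id; eauto.
Qed.

Lemma adm_bwd : forall q w wl wtT q'T t'T q''T t''T,
  adm (TT) (ee q) w wl wtT q'T t'T q''T t''T ->
  exists wt q' t' q'', q''T = ee q'' /\ adm Te q w wl wt q' t' q'' t''T.
Proof.
  intros q w wl wtT q'T t'T q''T t''T [Htr [HCl [HA HB]]].
  destruct Htr as [Hd|[E _]]; [|discriminate].
  destruct Hd as [q0 [wt [q' [t' [q''0 [E1 [E2 [Htr [HCl' Hg]]]]]]]]].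
  injection E1 as <-. subst q'T.
  destruct (Cl_TT_inv HCl) as [-> Et].
  assert (t''T = t'T).
  { rewrite Et. destruct HCl' as [_ ->]. apply alpha_den. }
  subst t''T.
  exists wt, q', t', q''0. split; auto. split; [|split; [|split]]; auto.
  - rewrite H; auto.
  - destruct Hg as [[_ [-> _]]|[HC _]]; auto using iquot_nb2.
  - destruct Hg as [[_ [-> _]]|[HC _]]; auto using iquot_nb2.
Qed.

Definition lift (M : Q Te -> OW -> Prop) : QT -> OW -> Prop :=
  fun qT => match qT with Some (Some q) => M q | _ => fun _ => False end.

Lemma lift_ijoin : forall M, lift (ijoin DO M) = ijoin DO (lift M).
Proof.
  intros M. apply pext2. intros [[q|]|] t; simpl; try reflexivity;
  unfold ijoin; split; [tauto| intros [[t' []] _]| tauto | intros [[t' []] _]].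
Qed.

Lemma simA : forall q t w wl M, RunR Te q t w wl M -> RunR (TT) (ee q) t w wl (lift M).
Proof.
  intros q t w wl M H. induction H.
  - replace (lift (fun q' t' => q' = q /\ t' = t)) with (fun (q' : QT) t' => q' = ee q /\ t' = t).
    + apply run_base; auto.
    + apply pext2. intros [[q1|]|] t1; simpl; split; try tauto; intros [E1 E2]; try discriminate.
      * injection E1 as ->. auto.
      * subst. auto.
  - set (fT := fun (wtT : IW) (q'T : QT) (t'T : OW) (q''T : QT) (t''T : OW) (q0 : QT) (t0 : OW) =>
      exists wt q' t' q'', adm Te q w wl wt q' t' q'' t''T /\ q''T = ee q'' /\
        lift (f wt q' t' q'' t''T) q0 t0).
    set (PT := fun q0 t0 => exists wt q' t' q'' t'', adm (TT) (ee q) w wl wt q' t' q'' t'' /\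
                 fT wt q' t' q'' t'' q0 t0).
    assert (Hf : forall wtT q'T t'T q''T t''T, adm (TT) (ee q) w wl wtT q'T t'T q''T t''T ->
       exists wt q' t' q'', q''T = ee q'' /\ adm Te q w wl wt q' t' q'' t''T /\
         fT wtT q'T t'T q''T t''T = lift (f wt q' t' q'' t''T)).
    { intros wtT q'T t'T q''T t''T Ha. destruct (adm_bwd Ha) as [wt [q' [t' [q'' [E Ha']]]]].
      exists wt, q', t', q''. split; auto. split; auto.
      apply pext2. intros q0 t0. unfold fT. split.
      - intros [wt1 [q1 [t1 [q2 [Ha1 [E1 Hl]]]]]]. subst q''T. injection E1 as <-.
        rewrite <- (run_fun (H0 _ _ _ _ _ Ha1) (H0 _ _ _ _ _ Ha')). auto.
      - intros Hl. exists wt, q', t', q''. auto. }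
    replace (lift _) with (ijoin DO PT).
    + apply run_step; auto. intros wtT q'T t'T q''T t''T Ha.
      destruct (Hf _ _ _ _ _ Ha) as [wt [q' [t' [q'' [E [Ha' ->]]]]]]. subst q''T.
      apply H1; auto.
    + rewrite lift_ijoin. f_equal. apply pext2. intros q0 t0. unfold PT. split.
      * intros [wtT [q'T [t'T [q''T [t''T [Ha Hft]]]]]].
        destruct (Hf _ _ _ _ _ Ha) as [wt [q' [t' [q'' [E [Ha' Ef]]]]]].
        rewrite Ef in Hft. destruct q0 as [[q0|]|]; simpl in Hft |- *; try contradiction.
        exists wt, q', t', q'', t''T. auto.
      * destruct q0 as [[q0|]|]; simpl; try contradiction.
        intros [wt [q' [t' [q'' [t'' [Ha Hm]]]]]].
        destruct (adm_fwd Ha) as [wtT HaT].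
        exists wtT, (ee q''), t'', (ee q''), t''. split; auto.
        exists wt, q', t', q''. auto.
Qed.

Lemma simB : forall qT t w wl M', RunR (TT) qT t w wl M' -> forall q, qT = ee q ->
  exists M, RunR Te q t w wl M.
Proof.
  intros qT t w wl M' H. induction H; intros q0 E; subst.
  - eexists. apply run_base; auto.
  - set (fe := fun (wt : IW) (q' : Q Te) (t' : OW) (q'' : Q Te) (t'' : OW) (a : Q Te) (b : OW) =>
       exists M, RunR Te q'' (oconc DO t t'') (itail DI w) wl M /\ M a b).
    eexists. apply (@run_step _ _ _ _ Te q0 t w wl fe); auto.
    intros wt q' t' q'' t'' Ha. destruct (adm_fwd Ha) as [wtT HaT].
    destruct (H1 _ _ _ _ _ HaT q'' eq_refl) as [M HM].
    replace (fe wt q' t' q'' t'') with M; auto.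
    apply pext2. intros a b. unfold fe. split; eauto.
    intros [M2 [HM2 Hab]]. rewrite (run_fun HM HM2). auto.
Qed.

Lemma runA : forall sb sh M, runT Te sb sh M -> runT (TT) sb sh (lift M).
Proof.
  intros sb sh M [g [Hg ->]].
  exists (fun qT t => match qT with Some (Some q) => lift (g q t) | _ => fun _ _ => False end).
  split.
  - intros qT t [q [-> H]]. simpl. apply simA. auto.
  - rewrite lift_ijoin. f_equal. apply pext2. intros q0 t0. split.
    + destruct q0 as [[q0|]|]; simpl; try contradiction.
      intros [q [t [H1 H2]]]. exists (ee q), t. split; [exists q; auto|]. exact H2.
    + intros [qT [t [[q [-> H1]] H2]]]. destruct q0 as [[q0|]|]; simpl in *; try contradiction.
      exists q, t. auto.
Qed.

Lemma runB : forall sb sh M', runT (TT) sb sh M' -> exists M, runT Te sb sh M /\ M' = lift M.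
Proof.
  intros sb sh M' [gT [Hg ->]].
  set (w := alpha (aw DI) (fun s => s = sb)). set (wl := alpha (aw DI) sh).
  set (g := fun q t a b => exists M, RunR Te q t w wl M /\ M a b).
  assert (Hgq : forall q t, iota0 Te q t -> RunR Te q t w wl (g q t) /\ gT (ee q) t = lift (g q t)).
  { intros q t Hi. assert (H1 : RunR (TT) (ee q) t w wl (gT (ee q) t)) by (apply Hg; exists q; auto).
    destruct (simB H1 eq_refl) as [M0 HM0].
    assert (Eg : g q t = M0).
    { apply pext2. intros a b. unfold g. split; eauto. intros [M2 [HM2 Hab]]. rewrite (run_fun HM0 HM2). auto. }
    rewrite Eg. split; auto. apply (run_fun H1 (simA HM0)). }
  exists (ijoin DO (fun q0 t0 => exists q t, iota0 Te q t /\ g q t q0 t0)). split.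
  - exists g. split; auto. intros q t Hi. apply Hgq; auto.
  - rewrite lift_ijoin. f_equal. apply pext2. intros q0 t0. split.
    + intros [qT [t [[q [-> H1]] H2]]]. rewrite (proj2 (Hgq _ _ H1)) in H2.
      destruct q0 as [[q0|]|]; simpl in *; try contradiction. exists q, t. auto.
    + destruct q0 as [[q0|]|]; simpl; try contradiction.
      intros [q [t [H1 H2]]]. exists (ee q), t. split; [exists q; auto|].
      rewrite (proj2 (Hgq _ _ H1)). exact H2.
Qed.

Lemma Lin_eq : forall sb sh, Lin Te sb sh <-> Lin (TT) sb sh.
Proof.
  intros sb sh. split.
  - intros [M [HM [q [t [Hq Hx]]]]]. exists (lift M). split; [apply runA; auto|].
    exists (ee q), t. auto.
  - intros [M' [HM [qT [t [Hq Hx]]]]]. destruct (runB HM) as [M [HM2 ->]].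
    exists M. split; auto. destruct qT as [[q|]|]; simpl in Hq; try contradiction.
    exists q, t. auto.
Qed.

Theorem equivT : tequiv Te (TT).
Proof.
  split; intros sb sh L; split.
  - intros [HL [M [q [t [HM [Hq HD]]]]]]. split; [apply Lin_eq; auto|].
    exists (lift M), (ee q), t. split; [apply runA; auto|]. auto.
  - intros [HL [M' [qT [t [HM [Hq HD]]]]]]. split; [apply Lin_eq; auto|].
    destruct (runB HM) as [M [HM2 ->]].
    destruct qT as [[q|]|]; simpl in Hq; try contradiction.
    exists M, q, t. auto.
  - intros [HL [M [q [t [HM [Hq [HF HD]]]]]]]. split; [apply Lin_eq; auto|].
    exists (lift M), (ee q), t. split; [apply runA; auto|]. split; auto. split; auto.
    exists q. auto.
  - intros [HL [M' [qT [t [HM [Hq [HF HD]]]]]]]. split; [apply Lin_eq; auto|].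
    destruct (runB HM) as [M [HM2 ->]].
    destruct qT as [[q|]|]; simpl in Hq; try contradiction.
    destruct HF as [q1 [E HF]]. injection E as <-.
    exists M, q, t. auto.
Qed.

Lemma TT_free : eps_free (TT).
Proof. intros q w q' t Hd. exact (dT_noteps Hd). Qed.

End Constr.

Theorem mainTheorem1 :
  forall (Sig The : Type) (DI : InDomain Sig) (DO : OutDomain The)
         (Te : transducer DI DO),
  exists T : transducer DI DO, eps_free T /\ tequiv Te T.
Proof.
  intros Sig The DI DO Te. exists (TT Te). split.
  - apply TT_free.
  - apply equivT.
Qed.
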